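(* Let $S^1=[0,1)$ with addition mod 1 and $T(x)=2x\pmod 1$. Let $J_1,J_2:S^1\to\mathbb{R}$ be positive with $\sum_{x:\,T(x)=y}J_i(x)=1$ for all $y$, where $J_1$ is Hölder continuous, i.e. $|J_1(r)-J_1(s)|\le K|r-s|^\alpha$ for some $K>0$, $0<\alpha\le1$, and $J_2$ is continuous. Let $\mu_1$ satisfy $\mathcal{L}_{\log J_1}^*\mu_1=\mu_1$, and let $\mu_2$ be the weak limit as $n\to\infty$ of the probabilities $$\rho_n=\sum_{j=1}^{2^n}\delta_{j/2^n}\prod_{k=0}^{n-1}J_2\big(T^k(j/2^n)\big).$$ Then the Jacobian $\tilde J$ of $\mu_1*\mu_2$ is Hölder continuous with the same exponent $\alpha$ and the same Hölder constant $K$.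
   Context: The Ruelle operator is $\mathcal{L}_{\log J}(\varphi)(y)=\sum_{x:\,T(x)=y}J(x)\varphi(x)$ and $\mathcal{L}_{\log J}^*$ its dual on probabilities; the Jacobian of a probability $\rho$ is the function $\tilde J$ with $\mathcal{L}_{\log \tilde J}^*\rho=\rho$ (here given by $\tilde J(u)=\int J_1(u-x)\,d\mu_2(x)$). Convolution: $\int\phi\,d(\eta*\mu)=\int\!\!\int\phi(x+y)\,d\mu(y)\,d\eta(x)$ (sums mod 1). *)

(* Defs.v *)
(* R : realType. The circle S^1 = [0,1) is modelled
   inside R; points are reduced mod 1 with [frac]. *)
From HB Require Import structures.
From mathcomp Require Import all_boot all_order all_algebra.
From mathcomp Require Import all_classical all_reals all_analysis.
Set Implicit Arguments. Unset Strict Implicit. Unset Printing Implicit Defensive.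
Import Order.TTheory GRing.Theory Num.Theory numFieldNormedType.Exports.
Local Open Scope classical_set_scope.
Local Open Scope ring_scope.

Section defs.
Variable R : realType.

Definition frac (x : R) : R := x - (Num.floor x)%:~R.

Definition T2 (x : R) : R := frac (2 * x).

Definition cdist (r s : R) : R := Num.min (frac (r - s)) (1 - frac (r - s)).

Definition positive_on_circle (J : R -> R) : Prop :=
  forall x, 0 <= x < 1 -> 0 < J x.

(* sum_{T x = y} J x = 1 for all y in [0,1) *)
Definition normalized (J : R -> R) : Prop :=
  forall y, 0 <= y < 1 -> J (y / 2) + J ((y + 1) / 2) = 1.

(* continuous functions on S^1, seen as functions on R through frac *)
Definition circle_continuous (f : R -> R) : Prop :=
  continuous (fun x : R => f (frac x)).

(* Ruelle operator L_{log J}(phi)(y) = sum_{T x = y} J x phi x  (y taken mod 1) *)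
Definition ruelle (J phi : R -> R) (y : R) : R :=
  J (frac y / 2) * phi (frac y / 2) + J ((frac y + 1) / 2) * phi ((frac y + 1) / 2).

(* a probability on R concentrated on [0,1) = S^1 *)
Definition circle_prob (mu : probability R R) : Prop :=
  mu `[(0:R), 1[%classic = 1%E.

(* L_{log J}^* mu = mu, tested against continuous functions on S^1 *)
Definition dual_fixed (J : R -> R) (mu : probability R R) : Prop :=
  forall phi : R -> R, circle_continuous phi ->
    (\int[mu]_x (ruelle J (fun z => phi (frac z)) x)%:E
     = \int[mu]_x (phi (frac x))%:E)%E.

Definition rho_weight (J : R -> R) (n j : nat) : R :=
  \prod_(0 <= k < n) J (frac (iter k T2 (j%:R / 2 ^+ n))).

(* integral of phi against rho_n = sum_{j=1}^{2^n} delta_{j/2^n} * weight *)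
Definition rho_int (J : R -> R) (n : nat) (phi : R -> R) : R :=
  \sum_(1 <= j < (2 ^ n).+1) rho_weight J n j * phi (frac (j%:R / 2 ^+ n)).

Definition weak_limit_rho (J : R -> R) (mu : probability R R) : Prop :=
  forall phi : R -> R, circle_continuous phi ->
    (fun n => rho_int J n phi) @ \oo --> fine (\int[mu]_x (phi (frac x))%:E).

Definition conv_jacobian (J1 : R -> R) (mu2 : probability R R) (u : R) : R :=
  fine (\int[mu2]_x (J1 (frac (u - x)))%:E).

Definition holder_circle (f : R -> R) (K alpha : R) : Prop :=
  forall r s, 0 <= r < 1 -> 0 <= s < 1 -> `|f r - f s| <= K * (cdist r s) `^ alpha.

End defs.

(* Main.v *)
Require Import Defs.
From mathcomp Require Import all_boot all_order all_algebra.
From mathcomp Require Import all_classical all_reals all_analysis.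
From mathcomp Require Import ring lra measurable_realfun.
Import Order.TTheory GRing.Theory Num.Theory numFieldNormedType.Exports.
Local Open Scope classical_set_scope.
Local Open Scope ring_scope.

Section S.
Variable R : realType.
Implicit Types (a b x y : R).
Local Notation frac := (@Defs.frac R).

Lemma frac_itv x : 0 <= frac x < 1.
Proof.
rewrite /frac subr_ge0 floor_le /= ltrBlDl.
have := floorD1_gt x. by rewrite intrD addrC.
Qed.

Lemma frac_addz x (k : int) : frac (x + k%:~R) = frac x.
Proof.
rewrite /frac floorDrz ?intr_int // intrKfloor intrD; lra.
Qed.

Lemma frac_eqz x : exists k : int, frac x = x + k%:~R.
Proof. exists (- Num.floor x); by rewrite /frac mulrNz. Qed.

Lemma frac_sub a b x : frac (frac (a - x) - frac (b - x)) = frac (a - b).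
Proof.
have [k1 ->] := frac_eqz (a - x); have [k2 ->] := frac_eqz (b - x).
have -> : a - x + k1%:~R - (b - x + k2%:~R) = a - b + (k1 - k2)%:~R.
  by rewrite intrB; lra.
by rewrite frac_addz.
Qed.

Lemma frac_id x : 0 <= x < 1 -> frac x = x.
Proof.
move=> hx; rewrite /frac (_ : Num.floor x = 0) ?subr0 //.
apply: floor_def; rewrite /= add0r; lra.
Qed.

Lemma cdist_le_abs a b : cdist a b <= `|a - b|.
Proof.
rewrite /cdist; set d := a - b.
have [hd|hd] := leP (2^-1) `|d|.
  have := frac_itv d; rewrite ge_min; move=> h.
  apply/orP; case: (leP (frac d) (2^-1)) => h2; [left|right]; lra.
case: (leP 0 d) => d0.
  rewrite ge_min frac_id; first by rewrite ger0_norm // lexx.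
  move: hd; rewrite ger0_norm //; lra.
have -> : frac d = d + 1%:~R.
  rewrite -(frac_addz d 1) frac_id //. move: hd; rewrite ltr0_norm //=; lra.
rewrite ge_min ltr0_norm //=; apply/orP; right; lra.
Qed.


Lemma cdist_ge0 a b : 0 <= cdist a b.
Proof. rewrite /cdist le_min; have := frac_itv (a - b); move=> h; apply/andP; split; lra. Qed.

Lemma cdist_frac a b : cdist (frac a) (frac b) = cdist a b.
Proof. by rewrite /cdist; have := frac_sub a b 0; rewrite !subr0 => ->. Qed.

Lemma holder_bound (J : R -> R) K alpha : 0 < K -> 0 < alpha ->
  holder_circle J K alpha ->
  forall y t, `|J (frac y) - J (frac t)| <= K * `|y - t| `^ alpha.
Proof.
move=> K0 a0 H y t; apply: le_trans (H _ _ (frac_itv y) (frac_itv t)) _.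
rewrite cdist_frac ler_pM2l //; apply: ge0_ler_powR; rewrite ?nnegrE ?cdist_ge0 //.
  exact: ltW.
exact: cdist_le_abs.
Qed.

Lemma holder_cont (J : R -> R) K alpha : 0 < K -> 0 < alpha ->
  holder_circle J K alpha -> continuous (fun x => J (frac x)).
Proof.
move=> K0 a0 H t; apply/cvgrPdist_lt => e e0.
set delta := (e / K) `^ alpha^-1.
have d0 : 0 < delta by rewrite powR_gt0 // divr_gt0.
have dA : delta `^ alpha = e / K.
  by rewrite /delta -powRrM mulVf ?gt_eqF // powRr1 // ltW // divr_gt0.
near=> y.
have hy : `|t - y| < delta.
  near: y; exists delta => //= y; rewrite /ball /=; done.
have hb := @holder_bound J K alpha K0 a0 H t y.
suff : K * `|t - y| `^ alpha < e by move=> h; exact: le_lt_trans hb h.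
rewrite -ltr_pdivlMl // mulrC -dA; apply: gt0_ltr_powR; rewrite ?nnegrE //; exact: ltW.
Unshelve. all: by end_near.
Qed.


Lemma J_bound (J : R -> R) : positive_on_circle J -> normalized J ->
  forall z, 0 <= J (frac z) <= 1.
Proof.
move=> pJ nJ z; have hw := frac_itv z; set w := frac z in hw *.
have Jw : 0 < J w by apply: pJ.
rewrite ltW //=.
have [w2|w2] := ltP w (2^-1).
  have := nJ (2 * w) ltac:(apply/andP; split; lra).
  have -> : 2 * w / 2 = w by field.
  have : 0 < J ((2 * w + 1) / 2) by apply: pJ; apply/andP; split; lra.
  lra.
have := nJ (2 * w - 1) ltac:(apply/andP; split; lra).
have -> : (2 * w - 1 + 1) / 2 = w by field.
have : 0 < J ((2 * w - 1) / 2) by apply: pJ; apply/andP; split; lra.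
lra.
Qed.

Lemma bdd_integrable (mu : probability R R) (h : R -> R) (M : R) :
  measurable_fun setT h -> (forall x, `|h x| <= M) ->
  mu.-integrable setT (EFin \o h).
Proof.
move=> mh hM.
apply: (@le_integrable _ _ _ mu setT measurableT (EFin \o h) (EFin \o cst M)).
- exact/measurable_EFinP.
- move=> x _ /=; rewrite lee_fin; apply: le_trans (hM x) _.
  exact: ler_norm.
- exact: finite_measure_integrable_cst.
Qed.


Lemma main (J1 : R -> R) (K alpha : R) (mu2 : probability R R) :
  positive_on_circle J1 -> normalized J1 ->
  0 < K -> 0 < alpha -> holder_circle J1 K alpha ->
  holder_circle (conv_jacobian J1 mu2) K alpha.
Proof.
move=> pJ nJ K0 a0 H r s hr hs.
set f := fun u x => J1 (frac (u - x)).
have cg := @holder_cont J1 K alpha K0 a0 H.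
have mf : forall u, measurable_fun setT (f u).
  move=> u; apply: continuous_measurable_fun => x.
  apply: (continuous_comp (f := fun x => u - x) (g := fun x => J1 (frac x))).
    exact: (@cvgB _ _ _ _ _ (fun=> u) (@id R)) (cvg_cst _) cvg_id.
  exact: cg.
have bf : forall u x, `|f u x| <= 1.
  move=> u x; have := @J_bound J1 pJ nJ (u - x); rewrite /f => /andP[h1 h2].
  by rewrite ger0_norm.
have intf : forall u, mu2.-integrable setT (EFin \o f u).
  by move=> u; apply: bdd_integrable (mf u) (bf u).
have -> : conv_jacobian J1 mu2 r - conv_jacobian J1 mu2 s =
          Rintegral mu2 setT (fun x => f r x - f s x).
  by rewrite RintegralB.
set c := cdist r s `^ alpha.
have hb : forall x, `|f r x - f s x| <= K * c.
  move=> x; apply: le_trans (H _ _ (frac_itv (r - x)) (frac_itv (s - x))) _.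
  by rewrite /c /cdist frac_sub.
have mfd : measurable_fun setT (fun x => f r x - f s x).
  exact: measurable_funB.
apply: le_trans (le_normr_Rintegral _ _) _ => //.
  exact: bdd_integrable mfd hb.
apply: le_trans (@le_Rintegral _ _ _ mu2 setT _ (fun=> K * c) _ _ _ _) _ => //.
- apply: (@bdd_integrable mu2 _ (K*c)); first exact: measurableT_comp.
  by move=> x; rewrite normr_id.
- apply: (@bdd_integrable mu2 _ `|K*c|); [exact: measurable_cst | by []].
rewrite Rintegral_cst //.
have -> : fine (mu2 setT) = 1 by rewrite probability_setT.
by rewrite mulr1.
Qed.

End S.

Theorem theorem2 (R : realType) (J1 J2 : R -> R) (K alpha : R)
  (mu1 mu2 : probability R R) :
  positive_on_circle J1 -> positive_on_circle J2 ->
  normalized J1 -> normalized J2 ->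
  0 < K -> 0 < alpha <= 1 -> holder_circle J1 K alpha ->
  circle_continuous J2 ->
  circle_prob mu1 -> dual_fixed J1 mu1 ->
  circle_prob mu2 -> weak_limit_rho J2 mu2 ->
  holder_circle (conv_jacobian J1 mu2) K alpha.
Proof.
move=> pJ _ nJ _ K0 /andP[a0 _] H _ _ _ _ _.
exact: main pJ nJ K0 a0 H.
Qed.
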